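(* For all $\boldsymbol{\omega}\in\mathbb{R}^N$, $$\left|\prod_{m=1}^M\frac{1}{1-z_m(\boldsymbol{\omega})}-\prod_{m=1}^M e^{z_m(\boldsymbol{\omega})}\right|\le\sum_{m=1}^M\min\Big\{2,\ \big|1-z_m(\boldsymbol{\omega})-e^{-z_m(\boldsymbol{\omega})}\big|\Big\}.$$
   Context: Let $\sigma_v^2>0$, $\beta(M)>0$, $\mathbf{h}\in\mathbb{C}^N$, and $\lambda_1,\dots,\lambda_M\ge0$ the eigenvalues of a Hermitian positive semidefinite $\boldsymbol{\Sigma}_{\mathbf{s}}\in\mathbb{C}^{M\times M}$. For $\boldsymbol{\omega}\in\mathbb{R}^N$ and $m\in[1:M]$ define $z_m(\boldsymbol{\omega})=j\frac{\lambda_m}{\beta(M)}\sum_{n=1}^N\frac{|h_n|^2\omega_n}{1-j\frac{\sigma_v^2\omega_n}{\beta(M)}}$, $j=\sqrt{-1}$. *)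

(* Defs.v *)
From Stdlib Require Import Reals.
From Coquelicot Require Import Coquelicot.
Open Scope R_scope.

Definition Cexp (z : Complex.C) : Complex.C :=
  (exp (Re z) * cos (Im z), exp (Re z) * sin (Im z)).

Fixpoint Csum (n : nat) (f : nat -> Complex.C) : Complex.C :=
  match n with O => RtoC 0 | S k => Cplus (Csum k f) (f k) end.
Fixpoint Cprod (n : nat) (f : nat -> Complex.C) : Complex.C :=
  match n with O => RtoC 1 | S k => Cmult (Cprod k f) (f k) end.
Fixpoint Rsum (n : nat) (f : nat -> R) : R :=
  match n with O => 0 | S k => Rsum k f + f k end.

(* z_m(omega), with indices n in 0..N-1;  lam is the m-th eigenvalue. *)
Definition zm (N : nat) (sigma2 beta lam : R) (h : nat -> Complex.C)
  (omega : nat -> R) : Complex.C :=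
  Cmult (Cmult Ci (RtoC (lam / beta)))
    (Csum N (fun n =>
       Cdiv (RtoC ((Cmod (h n))^2 * omega n))
            (Cminus (RtoC 1) (Cmult Ci (RtoC (sigma2 * omega n / beta)))))).

(* Main.v *)
Require Import Defs.
From Stdlib Require Import Reals Lra Lia.
From Coquelicot Require Import Coquelicot.
Open Scope R_scope.

Lemma Re_Csum N f : Re (Csum N f) = Rsum N (fun n => Re (f n)).
Proof. induction N; simpl; [reflexivity|]. rewrite <- IHN. reflexivity. Qed.
Lemma Im_Csum N f : Im (Csum N f) = Rsum N (fun n => Im (f n)).
Proof. induction N; simpl; [reflexivity|]. rewrite <- IHN. reflexivity. Qed.
Lemma Rsum_ge0 N f : (forall n, 0 <= f n) -> 0 <= Rsum N f.
Proof. intros H; induction N; simpl; [lra|]. specialize (H N). lra. Qed.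

Lemma Im_term r t : Im (Cdiv (RtoC r) (Cminus (RtoC 1) (Cmult Ci (RtoC t)))) = r * t / (1 + t^2).
Proof.
  unfold Cdiv, Cminus, Cmult, Cinv, Copp, Cplus, RtoC, Ci; simpl.
  assert (0 < 1 + t*t) by nra. field. lra.
Qed.

Lemma Re_zm N s b lam h om : 0 < s -> 0 < b -> 0 <= lam -> Re (zm N s b lam h om) <= 0.
Proof.
  intros Hs Hb Hl. unfold zm.
  set (w := Csum _ _).
  assert (Hw : 0 <= Im w).
  { unfold w. rewrite Im_Csum. apply Rsum_ge0. intro n. rewrite Im_term.
    assert (0 <= Cmod (h n)) by apply Cmod_ge_0.
    assert (E : Cmod (h n) ^ 2 * om n * (s * om n / b) = (Cmod (h n))^2 * (om n)^2 * s / b) by (field; lra).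
    rewrite E. apply Rmult_le_pos.
    - unfold Rdiv. apply Rmult_le_pos; [|left; apply Rinv_0_lt_compat; lra].
      apply Rmult_le_pos; [|lra]. apply Rmult_le_pos; apply pow2_ge_0.
    - left; apply Rinv_0_lt_compat. assert (0 <= (s*om n/b)^2) by apply pow2_ge_0. lra. }
  destruct w as [x y]. simpl in Hw |- *.
  assert (0 <= lam / b) by (unfold Rdiv; apply Rmult_le_pos; [lra| left; apply Rinv_0_lt_compat; lra]).
  nra.
Qed.

Lemma Cexp_opp z : Cmult (Cexp z) (Cexp (Copp z)) = RtoC 1.
Proof.
  destruct z as [x y]; unfold Cexp, Cmult, Copp, RtoC; simpl.
  rewrite cos_neg, sin_neg, exp_Ropp.
  assert (Hx : exp x <> 0) by (apply Rgt_not_eq, exp_pos).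
  assert (Hs := sin2_cos2 y). unfold Rsqr in Hs.
  f_equal; field_simplify; auto; nra.
Qed.

Lemma Cmod_Cexp z : Cmod (Cexp z) = exp (Re z).
Proof.
  destruct z as [x y]; unfold Cexp, Cmod; simpl.
  assert (Hs := sin2_cos2 y). unfold Rsqr in Hs.
  replace ((exp x * cos y) * ((exp x * cos y) * 1) + (exp x * sin y) * ((exp x * sin y) * 1)) with (exp x * exp x) by nra.
  apply sqrt_square. left; apply exp_pos.
Qed.

Lemma tele M (a b : nat -> Complex.C) (f : nat -> R) :
  (forall m, (m < M)%nat -> Cmod (a m) <= 1 /\ Cmod (b m) <= 1 /\ Cmod (Cminus (a m) (b m)) <= f m) ->
  Cmod (Cminus (Cprod M a) (Cprod M b)) <= Rsum M f /\ Cmod (Cprod M a) <= 1 /\ Cmod (Cprod M b) <= 1.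
Proof.
  induction M as [|M IH]; intros H; simpl.
  - replace (Cminus (RtoC 1) (RtoC 1)) with (RtoC 0) by (unfold Cminus, Cplus, Copp, RtoC; simpl; f_equal; ring).
    rewrite Cmod_0, Cmod_1. lra.
  - destruct IH as [H1 [H2 H3]]. { intros m Hm. apply H. lia. }
    destruct (H M ltac:(lia)) as [Ha [Hb Hd]].
    replace (Cminus (Cmult (Cprod M a) (a M)) (Cmult (Cprod M b) (b M)))
      with (Cplus (Cmult (Cminus (Cprod M a) (Cprod M b)) (a M)) (Cmult (Cprod M b) (Cminus (a M) (b M))))
      by (unfold Cminus; ring).
    rewrite !Cmod_mult.
    assert (G1 := Cmod_ge_0 (Cminus (Cprod M a) (Cprod M b))).
    assert (G2 := Cmod_ge_0 (Cprod M b)).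
    assert (G3 := Cmod_ge_0 (Cprod M a)).
    assert (G4 := Cmod_ge_0 (a M)).
    assert (G5 := Cmod_ge_0 (Cminus (a M) (b M))).
    assert (G6 := Cmod_ge_0 (b M)).
    split; [|split; nra].
    eapply Rle_trans; [apply Cmod_triangle|]. rewrite !Cmod_mult. nra.
Qed.

Theorem lemma3 (N M : nat) (sigma2 beta : R) (h : nat -> Complex.C)
  (lam : nat -> R) (omega : nat -> R)
  (Hsigma : 0 < sigma2) (Hbeta : 0 < beta)
  (Hlam : forall m, (m < M)%nat -> 0 <= lam m) :
  let z := fun m => zm N sigma2 beta (lam m) h omega in
  Cmod (Cminus (Cprod M (fun m => Cinv (Cminus (RtoC 1) (z m))))
               (Cprod M (fun m => Cexp (z m))))
  <= Rsum M (fun m => Rmin 2 (Cmod (Cminus (Cminus (RtoC 1) (z m)) (Cexp (Copp (z m)))))).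
Proof.
  intros z. apply tele. intros m Hm.
  assert (Hre : Re (z m) <= 0) by (apply Re_zm; auto).
  set (u := Cminus (RtoC 1) (z m)).
  assert (Hu : 1 <= Cmod u).
  { eapply Rle_trans; [|apply re_le_Cmod]. unfold u. destruct (z m) as [x y]; simpl in *.
    rewrite Rabs_right; lra. }
  assert (Hu0 : u <> RtoC 0).
  { intro E. rewrite E, Cmod_0 in Hu. lra. }
  assert (Ha : Cmod (Cinv u) <= 1).
  { rewrite Cmod_inv by auto. rewrite <- Rinv_1. apply Rinv_le_contravar; lra. }
  assert (Hb : Cmod (Cexp (z m)) <= 1).
  { rewrite Cmod_Cexp. rewrite <- exp_0. destruct Hre as [Hlt|Heq]; [left; apply exp_increasing; auto | rewrite Heq; right; reflexivity]. }
  split; [auto|split; [auto|]].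
  assert (E : Cminus (Cinv u) (Cexp (z m)) =
              Cmult (Cmult (Cinv u) (Cexp (z m))) (Cminus (Cexp (Copp (z m))) u)).
  { assert (Hp := Cexp_opp (z m)).
    transitivity (Cminus (Cmult (Cinv u) (Cmult (Cexp (z m)) (Cexp (Copp (z m))))) (Cmult (Cmult (Cinv u) u) (Cexp (z m)))).
    - rewrite Hp. rewrite Cinv_l by auto. unfold Cminus. ring.
    - unfold Cminus. ring. }
  assert (H2 : Cmod (Cminus (Cinv u) (Cexp (z m))) <= 2).
  { eapply Rle_trans; [unfold Cminus; apply Cmod_triangle|]. rewrite Cmod_opp. lra. }
  apply Rmin_glb; [exact H2|].
  rewrite E, !Cmod_mult.
  assert (G1 := Cmod_ge_0 (Cinv u)). assert (G2 := Cmod_ge_0 (Cexp (z m))).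
  assert (Hd : Cmod (Cminus (Cexp (Copp (z m))) u) = Cmod (Cminus u (Cexp (Copp (z m))))).
  { rewrite <- Cmod_opp. f_equal. unfold Cminus. ring. }
  rewrite Hd. fold u.
  assert (G3 := Cmod_ge_0 (Cminus u (Cexp (Copp (z m))))).
  assert (Hab : Cmod (/ u) * Cmod (Cexp (z m)) <= 1) by nra. nra.
Qed.
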